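(* Let $\mathcal{U}=\begin{pmatrix}\mathcal{A}&\mathcal{M}\\ \mathcal{N}&\mathcal{B}\end{pmatrix}$ be a generalized matrix ring in which $\mathcal{A}$ and $\mathcal{B}$ are 2-torsion free, and let $\phi:\mathcal{U}\to\mathcal{U}$ be an additive mapping such that $\phi(U)\circ V+U\circ\phi(V)=0$ whenever $U,V\in\mathcal{U}$ satisfy $UV=VU=0$. Then $\phi(I)$ lies in the center $Z(\mathcal{U})$ of $\mathcal{U}$. In particular $P\phi(I)=\phi(I)P$ for every idempotent $P\in\mathcal{U}$.
   Context: A generalized matrix ring is built from: unital rings $\mathcal{A},\mathcal{B}$; a unital $(\mathcal{A},\mathcal{B})$-bimodule $\mathcal{M}$ which is faithful on both sides (if $A\mathcal{M}=\{0\}$ then $A=0$; if $\mathcal{M}B=\{0\}$ then $B=0$); a unital $(\mathcal{B},\mathcal{A})$-bimodule $\mathcal{N}$; and bimodule homomorphisms $\mathcal{M}\otimes_{\mathcal{B}}\mathcal{N}\to\mathcal{A}$, $\mathcal{N}\otimes_{\mathcal{A}}\mathcal{M}\to\mathcal{B}$, written $MN$, $NM$, with $(MN)M'=M(NM')$, $(NM)N'=N(MN')$. $\mathcal{U}$ is the ring of matrices $\begin{pmatrix}A&M\\N&B\end{pmatrix}$ under the usual matrix operations, with identity $I$. 2-torsion free: $2X=0\Rightarrow X=0$. $X\circ Y=XY+YX$. The center is $Z(\mathcal{U})=\{\mathrm{diag}(A,B): AM=MB,\ NA=BN \text{ for all } M\in\mathcal{M},N\in\mathcal{N}\}$. *)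

(* Defs.v *)
From HB Require Import structures.
From mathcomp Require Import all_boot all_order all_algebra.
Set Implicit Arguments. Unset Strict Implicit. Unset Printing Implicit Defensive.
Import GRing.Theory.
Local Open Scope ring_scope.

(* Data of a generalized matrix ring (A, M, N, B):
   A, B unital rings; M an (A,B)-bimodule; N a (B,A)-bimodule;
   pairings  mn : M x N -> A,  nm : N x M -> B  (bimodule homomorphisms
   from the balanced tensor products). *)
Record GMR (A B : pzRingType) (M N : zmodType) := {
  actAM : A -> M -> M;
  actMB : M -> B -> M;
  actBN : B -> N -> N;
  actNA : N -> A -> N;
  pMN : M -> N -> A;
  pNM : N -> M -> B;
  actAM_addl : forall a a' m, actAM (a + a') m = actAM a m + actAM a' m;
  actAM_addr : forall a m m', actAM a (m + m') = actAM a m + actAM a m';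
  actAM_mul : forall a a' m, actAM (a * a') m = actAM a (actAM a' m);
  actAM_1 : forall m, actAM 1 m = m;
  actMB_addl : forall m m' b, actMB (m + m') b = actMB m b + actMB m' b;
  actMB_addr : forall m b b', actMB m (b + b') = actMB m b + actMB m b';
  actMB_mul : forall m b b', actMB m (b * b') = actMB (actMB m b) b';
  actMB_1 : forall m, actMB m 1 = m;
  actM_assoc : forall a m b, actMB (actAM a m) b = actAM a (actMB m b);
  actBN_addl : forall b b' n, actBN (b + b') n = actBN b n + actBN b' n;
  actBN_addr : forall b n n', actBN b (n + n') = actBN b n + actBN b n';
  actBN_mul : forall b b' n, actBN (b * b') n = actBN b (actBN b' n);
  actBN_1 : forall n, actBN 1 n = n;
  actNA_addl : forall n n' a, actNA (n + n') a = actNA n a + actNA n' a;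
  actNA_addr : forall n a a', actNA n (a + a') = actNA n a + actNA n a';
  actNA_mul : forall n a a', actNA n (a * a') = actNA (actNA n a) a';
  actNA_1 : forall n, actNA n 1 = n;
  actN_assoc : forall b n a, actNA (actBN b n) a = actBN b (actNA n a);
  pMN_addl : forall m m' n, pMN (m + m') n = pMN m n + pMN m' n;
  pMN_addr : forall m n n', pMN m (n + n') = pMN m n + pMN m n';
  pMN_bal : forall m b n, pMN (actMB m b) n = pMN m (actBN b n);
  pMN_l : forall a m n, pMN (actAM a m) n = a * pMN m n;
  pMN_r : forall m n a, pMN m (actNA n a) = pMN m n * a;
  pNM_addl : forall n n' m, pNM (n + n') m = pNM n m + pNM n' m;
  pNM_addr : forall n m m', pNM n (m + m') = pNM n m + pNM n m';
  pNM_bal : forall n a m, pNM (actNA n a) m = pNM n (actAM a m);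
  pNM_l : forall b n m, pNM (actBN b n) m = b * pNM n m;
  pNM_r : forall n m b, pNM n (actMB m b) = pNM n m * b;
  pM_assoc : forall m n m', actAM (pMN m n) m' = actMB m (pNM n m');
  pN_assoc : forall n m n', actBN (pNM n m) n' = actNA n (pMN m n');
  M_faithful_l : forall a, (forall m, actAM a m = 0) -> a = 0;
  M_faithful_r : forall b, (forall m, actMB m b = 0) -> b = 0
}.

Record gmat (A B : pzRingType) (M N : zmodType) :=
  GMat { g11 : A; g12 : M; g21 : N; g22 : B }.

Section Ops.
Variables (A B : pzRingType) (M N : zmodType) (G : GMR A B M N).

Definition gadd (X Y : gmat A B M N) : gmat A B M N :=
  GMat (g11 X + g11 Y) (g12 X + g12 Y) (g21 X + g21 Y) (g22 X + g22 Y).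

Definition gmul (X Y : gmat A B M N) : gmat A B M N :=
  GMat (g11 X * g11 Y + pMN G (g12 X) (g21 Y))
       (actAM G (g11 X) (g12 Y) + actMB G (g12 X) (g22 Y))
       (actBN G (g22 X) (g21 Y) + actNA G (g21 X) (g11 Y))
       (pNM G (g21 X) (g12 Y) + g22 X * g22 Y).

Definition gzero : gmat A B M N := GMat 0 0 0 0.
Definition gone : gmat A B M N := GMat 1 0 0 1.

Definition gjordan (X Y : gmat A B M N) : gmat A B M N :=
  gadd (gmul X Y) (gmul Y X).

Definition gcenter (Z : gmat A B M N) : Prop :=
  forall X, gmul Z X = gmul X Z.

End Ops.

Definition two_torsion_free (R : zmodType) : Prop :=
  forall x : R, x + x = 0 -> x = 0.

(* Main.v *)
Require Import Defs.
From HB Require Import structures.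
From mathcomp Require Import all_boot all_order all_algebra.
From mathcomp Require Import ssrAC.
Local Open Scope ring_scope.
Import GRing.Theory.

Lemma add_lin (U V : zmodType) (f : U -> V) :
  (forall x y, f (x + y) = f x + f y) -> f 0 = 0 /\ forall x, f (- x) = - f x.
Proof.
move=> h; have h0 : f 0 = 0.
  by apply: (addrI (f 0)); rewrite -h !addr0.
split=> // x; apply: (addrI (f x)); by rewrite -h !subrr.
Qed.

Set Implicit Arguments.
Section L.
Variables (A B : pzRingType) (M N : zmodType) (G : GMR A B M N).
Lemma actAM0l m : actAM G 0 m = 0. Proof. exact: (proj1 (add_lin _ _ (fun a => actAM G a m) (fun x y => actAM_addl G x y m))). Qed.
Lemma actAMNl a m : actAM G (-a) m = - actAM G a m. Proof. exact: (proj2 (add_lin _ _ (fun a => actAM G a m) (fun x y => actAM_addl G x y m))). Qed.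
Lemma actAM0r a : actAM G a 0 = 0. Proof. exact: (proj1 (add_lin _ _ (actAM G a) (actAM_addr G a))). Qed.
Lemma actAMNr a m : actAM G a (-m) = - actAM G a m. Proof. exact: (proj2 (add_lin _ _ (actAM G a) (actAM_addr G a))). Qed.
Lemma actMB0l m : actMB G 0 m = 0. Proof. exact: (proj1 (add_lin _ _ (fun a => actMB G a m) (fun x y => actMB_addl G x y m))). Qed.
Lemma actMBNl a m : actMB G (-a) m = - actMB G a m. Proof. exact: (proj2 (add_lin _ _ (fun a => actMB G a m) (fun x y => actMB_addl G x y m))). Qed.
Lemma actMB0r a : actMB G a 0 = 0. Proof. exact: (proj1 (add_lin _ _ (actMB G a) (actMB_addr G a))). Qed.
Lemma actMBNr a m : actMB G a (-m) = - actMB G a m. Proof. exact: (proj2 (add_lin _ _ (actMB G a) (actMB_addr G a))). Qed.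
Lemma actBN0l m : actBN G 0 m = 0. Proof. exact: (proj1 (add_lin _ _ (fun a => actBN G a m) (fun x y => actBN_addl G x y m))). Qed.
Lemma actBNNl a m : actBN G (-a) m = - actBN G a m. Proof. exact: (proj2 (add_lin _ _ (fun a => actBN G a m) (fun x y => actBN_addl G x y m))). Qed.
Lemma actBN0r a : actBN G a 0 = 0. Proof. exact: (proj1 (add_lin _ _ (actBN G a) (actBN_addr G a))). Qed.
Lemma actBNNr a m : actBN G a (-m) = - actBN G a m. Proof. exact: (proj2 (add_lin _ _ (actBN G a) (actBN_addr G a))). Qed.
Lemma actNA0l m : actNA G 0 m = 0. Proof. exact: (proj1 (add_lin _ _ (fun a => actNA G a m) (fun x y => actNA_addl G x y m))). Qed.
Lemma actNANl a m : actNA G (-a) m = - actNA G a m. Proof. exact: (proj2 (add_lin _ _ (fun a => actNA G a m) (fun x y => actNA_addl G x y m))). Qed.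
Lemma actNA0r a : actNA G a 0 = 0. Proof. exact: (proj1 (add_lin _ _ (actNA G a) (actNA_addr G a))). Qed.
Lemma actNANr a m : actNA G a (-m) = - actNA G a m. Proof. exact: (proj2 (add_lin _ _ (actNA G a) (actNA_addr G a))). Qed.
Lemma pMN0l m : pMN G 0 m = 0. Proof. exact: (proj1 (add_lin _ _ (fun a => pMN G a m) (fun x y => pMN_addl G x y m))). Qed.
Lemma pMNNl a m : pMN G (-a) m = - pMN G a m. Proof. exact: (proj2 (add_lin _ _ (fun a => pMN G a m) (fun x y => pMN_addl G x y m))). Qed.
Lemma pMN0r a : pMN G a 0 = 0. Proof. exact: (proj1 (add_lin _ _ (pMN G a) (pMN_addr G a))). Qed.
Lemma pMNNr a m : pMN G a (-m) = - pMN G a m. Proof. exact: (proj2 (add_lin _ _ (pMN G a) (pMN_addr G a))). Qed.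
Lemma pNM0l m : pNM G 0 m = 0. Proof. exact: (proj1 (add_lin _ _ (fun a => pNM G a m) (fun x y => pNM_addl G x y m))). Qed.
Lemma pNMNl a m : pNM G (-a) m = - pNM G a m. Proof. exact: (proj2 (add_lin _ _ (fun a => pNM G a m) (fun x y => pNM_addl G x y m))). Qed.
Lemma pNM0r a : pNM G a 0 = 0. Proof. exact: (proj1 (add_lin _ _ (pNM G a) (pNM_addr G a))). Qed.
Lemma pNMNr a m : pNM G a (-m) = - pNM G a m. Proof. exact: (proj2 (add_lin _ _ (pNM G a) (pNM_addr G a))). Qed.
End L.

Ltac simp G := rewrite ?(actAM0l G, actAM0r G, actMB0l G, actMB0r G, actBN0l G, actBN0r G,
  actNA0l G, actNA0r G, pMN0l G, pMN0r G, pNM0l G, pNM0r G,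
  actAMNl G, actAMNr G, actMBNl G, actMBNr G, actBNNl G, actBNNr G,
  actNANl G, actNANr G, pMNNl G, pMNNr G, pNMNl G, pNMNr G,
  actAM_addl G, actAM_addr G, actMB_addl G, actMB_addr G, actBN_addl G, actBN_addr G,
  actNA_addl G, actNA_addr G, pMN_addl G, pMN_addr G, pNM_addl G, pNM_addr G,
  actAM_1 G, actMB_1 G, actBN_1 G, actNA_1 G,
  mul0r, mulr0, mul1r, mulr1, add0r, addr0, oppr0, opprK, mulrN, mulNr, mulrDl, mulrDr, addNr, subrr).
Ltac simpin G H := rewrite ?(actAM0l G, actAM0r G, actMB0l G, actMB0r G, actBN0l G, actBN0r G,
  actNA0l G, actNA0r G, pMN0l G, pMN0r G, pNM0l G, pNM0r G,
  actAMNl G, actAMNr G, actMBNl G, actMBNr G, actBNNl G, actBNNr G,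
  actNANl G, actNANr G, pMNNl G, pMNNr G, pNMNl G, pNMNr G,
  actAM_addl G, actAM_addr G, actMB_addl G, actMB_addr G, actBN_addl G, actBN_addr G,
  actNA_addl G, actNA_addr G, pMN_addl G, pMN_addr G, pNM_addl G, pNM_addr G,
  actAM_1 G, actMB_1 G, actBN_1 G, actNA_1 G,
  mul0r, mulr0, mul1r, mulr1, add0r, addr0, oppr0, opprK, mulrN, mulNr, mulrDl, mulrDr, addNr, subrr) in H.


Lemma gm0 (A B : pzRingType) (M N : zmodType) (a : A) (b : M) (c : N) (d : B) :
  GMat a b c d = gzero A B M N -> [/\ a = 0, b = 0, c = 0 & d = 0].
Proof. by case. Qed.

Lemma absM (V : zmodType) (a u w z p x : V) :
  -(a+u) + (p + x) - w + ((-p - x) + (z - w) + -u) = 0 -> u + w + (w + u) = 0 -> a = z.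
Proof.
move=> h1 h2; apply/eqP; rewrite eq_sym -subr_eq0; apply/eqP.
rewrite -h1 -[LHS]subr0 -h2.
rewrite !opprD ?opprK !addrA.
by rewrite [RHS](ACl ((8*1*2*5*9*10)*(3*6)*(4*7))%AC) /= !subrr !addr0.
Qed.

Lemma absN (V : zmodType) (a u w z p x : V) :
  - w + (p + x - (a + u)) + (- u + (z - w + (- p - x))) = 0 -> w + u + (u + w) = 0 -> a = z.
Proof.
move=> h1 h2; apply/eqP; rewrite eq_sym -subr_eq0; apply/eqP.
rewrite -h1 -[LHS]subr0 -h2.
rewrite !opprD ?opprK !addrA.
by rewrite [RHS](ACl ((7*4*1*5*6*8)*(2*9)*(3*10))%AC) /= !subrr !addr0.
Qed.

Theorem lemma2p2 (A B : pzRingType) (M N : zmodType) (G : GMR A B M N)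
  (hA : two_torsion_free A) (hB : two_torsion_free B)
  (phi : gmat A B M N -> gmat A B M N)
  (phi_add : forall X Y, phi (gadd X Y) = gadd (phi X) (phi Y))
  (hphi : forall U V, gmul G U V = gzero A B M N -> gmul G V U = gzero A B M N ->
            gadd (gjordan G (phi U) V) (gjordan G U (phi V)) = gzero A B M N) :
  gcenter G (phi (gone A B M N)) /\
  (forall P, gmul G P P = P ->
     gmul G P (phi (gone A B M N)) = gmul G (phi (gone A B M N)) P).
Proof.
have eI : gone A B M N = gadd (GMat 1 0 0 0) (GMat 0 0 0 1).
  by rewrite /gone /gadd /= !addr0 !add0r.
case eP: (phi (GMat 1 0 0 0)) => [p1 p2 p3 p4].
case eQ: (phi (GMat 0 0 0 1)) => [q1 q2 q3 q4].
have HPQ := hphi (GMat 1 0 0 0) (GMat 0 0 0 1).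
rewrite eP eQ /gmul /gjordan /gadd /= in HPQ.
have [a11 a12 a21 a22] := gm0 (HPQ ltac:(by simp G) ltac:(by simp G)).
simpin G a11; simpin G a12; simpin G a21; simpin G a22.
have q10 : q1 = 0 by apply: hA.
have p40 : p4 = 0 by apply: hB.
have hM : forall m, actAM G p1 m = actMB G m q4.
  move=> m.
  case eX: (phi (GMat 0 m 0 0)) => [x1 x2 x3 x4].
  have HX := hphi (GMat 0 m 0 0) (GMat 0 m 0 0).
  rewrite eX /gmul /gjordan /gadd /= in HX.
  have [b11 b12 b21 b22] := gm0 (HX ltac:(by simp G) ltac:(by simp G)).
  simpin G b11; simpin G b12; simpin G b21; simpin G b22.
  have eQV : GMat 0 0 0 1 = gadd (GMat 0 (-m) 0 1) (GMat 0 m 0 0 : gmat A B M N).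
    by rewrite /gadd /= addNr !addr0.
  case eV: (phi (GMat 0 (-m) 0 1)) => [v1 v2 v3 v4].
  move: eQ; rewrite eQV phi_add eV eX /gadd => -[e1 e2 e3 e4].
  have HU := hphi (gadd (GMat 1 0 0 0) (GMat 0 m 0 0)) (GMat 0 (-m) 0 1).
  rewrite phi_add eP eX eV /gmul /gjordan /gadd /= in HU.
  have [c11 c12 c21 c22] := gm0 (HU ltac:(by simp G) ltac:(by simp G)).
  have eq2 : q2 = -p2 by apply/eqP; rewrite -addr_eq0 addrC a12.
  have ev1 : v1 = - x1 by apply/eqP; rewrite -addr_eq0 e1 q10.
  have ev2 : v2 = q2 - x2 by apply/eqP; rewrite eq_sym subr_eq e2.
  have ev4 : v4 = q4 - x4 by apply/eqP; rewrite eq_sym subr_eq e4.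
  rewrite ev1 ev2 ev4 eq2 p40 in c12; simpin G c12.
  exact: absM c12 b12.
have hN : forall n, actNA G n p1 = actBN G q4 n.
  move=> n.
  case eX: (phi (GMat 0 0 n 0)) => [x1 x2 x3 x4].
  have HX := hphi (GMat 0 0 n 0) (GMat 0 0 n 0).
  rewrite eX /gmul /gjordan /gadd /= in HX.
  have [b11 b12 b21 b22] := gm0 (HX ltac:(by simp G) ltac:(by simp G)).
  simpin G b11; simpin G b12; simpin G b21; simpin G b22.
  have eQV : GMat 0 0 0 1 = gadd (GMat 0 0 (-n) 1) (GMat 0 0 n 0 : gmat A B M N).
    by rewrite /gadd /= addNr !addr0.
  case eV: (phi (GMat 0 0 (-n) 1)) => [v1 v2 v3 v4].
  move: eQ; rewrite eQV phi_add eV eX /gadd => -[e1 e2 e3 e4].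
  have HU := hphi (gadd (GMat 1 0 0 0) (GMat 0 0 n 0)) (GMat 0 0 (-n) 1).
  rewrite phi_add eP eX eV /gmul /gjordan /gadd /= in HU.
  have [c11 c12 c21 c22] := gm0 (HU ltac:(by simp G) ltac:(by simp G)).
  have eq3 : q3 = -p3 by apply/eqP; rewrite -addr_eq0 addrC a21.
  have ev1 : v1 = - x1 by apply/eqP; rewrite -addr_eq0 e1 q10.
  have ev3 : v3 = q3 - x3 by apply/eqP; rewrite eq_sym subr_eq e3.
  have ev4 : v4 = q4 - x4 by apply/eqP; rewrite eq_sym subr_eq e4.
  rewrite ev1 ev3 ev4 eq3 p40 in c21; simpin G c21.
  exact: absN c21 b21.
have phiI : phi (gone A B M N) = GMat p1 0 0 q4.
  by rewrite eI phi_add eP eQ /gadd /= q10 p40 a12 a21 addr0 add0r.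
have hc : gcenter G (GMat p1 0 0 q4).
  move=> [x1 x2 x3 x4]; rewrite /gmul /=; simp G.
  congr (GMat _ _ _ _).
  - apply: subr0_eq; apply: (@M_faithful_l _ _ _ _ G) => m.
    by rewrite actAM_addl actAMNl !actAM_mul !hM -actM_assoc subrr.
  - by rewrite hM.
  - by rewrite hN.
  - apply: subr0_eq; apply: (@M_faithful_r _ _ _ _ G) => m.
    by rewrite actMB_addr actMBNr !actMB_mul -!hM actM_assoc subrr.
rewrite phiI; split=> // P _; by rewrite hc.
Qed.
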